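(* Let $A$ be a finite abelian group of order $n$ which is not a $2$-group, and let $S$ be a random inverse-closed subset of $A$ chosen as in the model below, with $\frac{25(\log n)^2}{n}\le p\le \frac12$. Then the probability that there exist subgroups $H,K$ of $A$ with $\{0\}\ne H\le K\lneq A$ such that $S\setminus K$ is a union of cosets of $H$ is $O(\exp(-(\log n)^2))$ as $n\to\infty$.
   Context: Random model: given a finite abelian group $A$ (written additively) and $0<p<1$, a random subset $S\subseteq A\setminus\{0\}$ is formed as follows: each element $g\in A$ of order exactly $2$ is put into $S$ independently with probability $p$, and for each pair $\{x,-x\}$ with $x\ne -x$, both $x$ and $-x$ are put into $S$ with probability $p$ (and neither otherwise), all these choices being independent. Thus $S=-S$ and $0\notin S$. $\log$ denotes $\log_2$. *)

(* Defs.v *)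
From HB Require Import structures.
From mathcomp Require Import all_boot all_order all_fingroup all_solvable.
From Stdlib Require Import Reals.

Set Implicit Arguments.
Unset Strict Implicit.
Unset Printing Implicit Defensive.

Definition log2 (x : R) : R := (ln x / ln 2)%R.

Section RandomModel.
Local Open Scope group_scope.
Variable gT : finGroupType.

(* The "choice units" of the model: the sets {x, x^-1} for x in A \ {1}
   (singletons for elements of order 2, pairs otherwise). *)
Definition inv_pairs (A : {set gT}) : {set {set gT}} :=
  [set [set x; x^-1] | x in A :\ 1].

Definition sym_subset (A S : {set gT}) : bool :=
  (S \subset A :\ 1) && (S^-1 == S).

Definition weight (A S : {set gT}) (p : R) : R :=
  (p ^ #|[set o in inv_pairs A | o \subset S]|
   * (1 - p) ^ #|[set o in inv_pairs A | ~~ (o \subset S)]|)%R.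

Definition prob (A : {set gT}) (p : R) (E : {set gT} -> bool) : R :=
  \big[Rplus/0%R]_(S : {set gT} | sym_subset A S && E S) weight A S p.

(* The event: there are subgroups 1 <> H <= K < A with S \ K a union of
   cosets of H (i.e. closed under translation by H). *)
Definition bad_event (A : {set gT}) (S : {set gT}) : bool :=
  [exists H : {group gT}, exists K : {group gT},
     [&& H :!=: 1, H \subset K, K \proper A &
         [forall x in S :\: K, x *: (H : {set gT}) \subset S :\: K]]].

End RandomModel.

(* Main.v *)
Require Import Defs.
From HB Require Import structures.
From mathcomp Require Import all_boot all_order all_fingroup all_solvable.
From Stdlib Require Import Reals.
From Stdlib Require Import Lra.
From mathcomp Require Import Rstruct zify.

Set Implicit Arguments.
Unset Strict Implicit.
Unset Printing Implicit Defensive.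

Module M_P1.


Section Sums.
Local Open Scope R_scope.

Lemma bigR_le (I : finType) (P : pred I) (F G : I -> R) :
  (forall i, P i -> F i <= G i) ->
  \big[Rplus/0]_(i | P i) F i <= \big[Rplus/0]_(i | P i) G i.
Proof.
move=> H; apply: (big_ind2 (fun x y => x <= y)) => //; first lra.
move=> ? ? ? ? ? ?; lra.
Qed.

Lemma bigR_ge0 (I : finType) (P : pred I) (F : I -> R) :
  (forall i, P i -> 0 <= F i) -> 0 <= \big[Rplus/0]_(i | P i) F i.
Proof.
move=> H; apply: (big_ind (fun x => 0 <= x)) => //; first lra.
move=> ? ? ? ?; lra.
Qed.

Lemma bigR_sub (I : finType) (P Q : pred I) (F : I -> R) :
  (forall i, P i -> Q i) -> (forall i, Q i -> 0 <= F i) ->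
  \big[Rplus/0]_(i | P i) F i <= \big[Rplus/0]_(i | Q i) F i.
Proof.
move=> PQ F0; rewrite [X in _ <= X](bigID P) /=.
have -> : \big[Rplus/0]_(i | Q i && P i) F i = \big[Rplus/0]_(i | P i) F i.
  apply: eq_bigl => i; case Pi: (P i); last by rewrite andbF.
  by rewrite (PQ _ Pi).
have : 0 <= \big[Rplus/0]_(i | Q i && ~~ P i) F i.
  by apply: bigR_ge0 => i /andP [Qi _]; apply: F0.
lra.
Qed.

Lemma powD1 (T : finType) (V Y : {set T}) x :
  (Y \in powerset (V :\ x)) = (Y \in powerset V) && (x \notin Y).
Proof.
rewrite !powersetE; apply/idP/andP => [YV'|[YV xY]].
  split; first by apply: subset_trans YV' (subsetDl _ _).
  by apply/negP => /(subsetP YV'); rewrite in_setD1 eqxx.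
apply/subsetP => y yY; rewrite in_setD1 (subsetP YV) // andbT.
by apply: contraNneq xY => <-.
Qed.

Lemma powU1 (T : finType) (V Y : {set T}) x : x \in V ->
  ((x |: Y \in powerset V) && ((x |: Y) :\ x == Y)) = (Y \in powerset (V :\ x)).
Proof.
move=> xV; rewrite !powersetE; apply/andP/idP => [[YV eY]|YV'].
  rewrite -(eqP eY); apply/subsetP => y; rewrite !in_setD1 => /andP [-> /=].
  by move=> yY; rewrite (subsetP YV) //; apply/setU1P; right.
have xY : x \notin Y by apply/negP => /(subsetP YV'); rewrite in_setD1 eqxx.
split; last by rewrite setU1K.
apply/subsetP => y /setU1P [-> //|yY].
by have := subsetP YV' y yY; rewrite in_setD1 => /andP [].
Qed.

Lemma sum_subsets (T : finType) (a b : R) (n : nat) (V : {set T}) :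
  #|V| = n ->
  \big[Rplus/0]_(Y in powerset V) (a ^ #|Y| * b ^ (#|V| - #|Y|)) = (a + b) ^ #|V|.
Proof.
elim: n V => [|n IH] V cV.
  move/eqP: cV; rewrite cards_eq0 => /eqP ->.
  rewrite powerset0 big_set1 cards0 /=; lra.
have [x xV] : exists x, x \in V.
  by apply/set0Pn; rewrite -card_gt0 cV.
set V' := V :\ x.
have cV' : #|V'| = n by move: cV; rewrite (cardsD1 x V) xV add1n => -[].
rewrite (bigID (fun Y : {set T} => x \in Y)) /=.
have E1 : \big[Rplus/0]_(Y in powerset V | x \notin Y) (a ^ #|Y| * b ^ (#|V| - #|Y|))
   = b * \big[Rplus/0]_(Y in powerset V') (a ^ #|Y| * b ^ (#|V'| - #|Y|)).
  rewrite (big_distrr _) /=.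
  apply: eq_big => Y; first by rewrite powD1.
  rewrite -powD1 -/V' powersetE => YV'.
  have := subset_leq_card YV'; rewrite cV' => le.
  rewrite cV -cV' subSn; last by rewrite cV'.
  rewrite /=; lra.
have E2 : \big[Rplus/0]_(Y in powerset V | x \in Y) (a ^ #|Y| * b ^ (#|V| - #|Y|))
   = a * \big[Rplus/0]_(Y in powerset V') (a ^ #|Y| * b ^ (#|V'| - #|Y|)).
  rewrite (big_distrr _) /=.
  rewrite (reindex_onto (fun Y => x |: Y) (fun Y => Y :\ x)) /=; last first.
    by move=> Y /andP [_ xY]; rewrite setD1K.
  apply: eq_big => Y; first by rewrite powersetE setU11 andbT -powersetE powU1.
  rewrite powersetE setU11 andbT -powersetE powU1 // -/V' powersetE => YV'.
  have xY : x \notin Y by apply/negP => /(subsetP YV'); rewrite in_setD1 eqxx.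
  rewrite cardsU1 xY add1n.
  have := subset_leq_card YV'; rewrite cV' => le.
  rewrite cV subSS /=; ring.
rewrite E1 E2 (IH V' cV') cV' cV /=; lra.
Qed.

End Sums.

End M_P1.
Import M_P1.

Module M_P2.


Lemma pow_shift (p q : R) (j k u : nat) : (0 <= p <= q)%R -> (k <= j <= u)%N ->
  (p ^ j * q ^ (u - j) <= p ^ k * q ^ (u - k))%R.
Proof.
move=> [p0 pq] /andP [kj ju].
have q0 : (0 <= q)%R by lra.
have [d1 Ej] : exists d1, j = (k + d1)%N by exists (j - k)%N; rewrite subnKC.
rewrite Ej in ju *.
have [d2 ->] : exists d2, u = (k + d1 + d2)%N by exists (u - (k + d1))%N; rewrite subnKC.
have -> : (k + d1 + d2 - (k + d1) = d2)%N by rewrite addKn.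
have -> : (k + d1 + d2 - k = d1 + d2)%N by rewrite -addnA addKn.
rewrite !pow_add.
have h1 : (p ^ d1 <= q ^ d1)%R by apply: pow_incr.
have h2 : (0 <= p ^ k)%R by apply: pow_le.
have h3 : (0 <= q ^ d2)%R by apply: pow_le.
have h4 : (0 <= p ^ d1)%R by apply: pow_le.
rewrite -Rmult_assoc; apply: Rmult_le_compat_r => //.
by apply: Rmult_le_compat_l.
Qed.

Section ProbBound.
Variable gT : finGroupType.
Variable A : {set gT}.
Variable p : R.
Hypothesis p0 : (0 <= p)%R.
Hypothesis p12 : (p <= 1/2)%R.

Local Notation U := (inv_pairs A).
Local Notation XS S := [set o in inv_pairs A | o \subset S].

Lemma weight_eq S : weight A S p = (p ^ #|XS S| * (1 - p) ^ (#|U| - #|XS S|))%R.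
Proof.
rewrite /weight; congr (_ * _)%R; congr (pow _ _).
have e1 : XS S = U :&: [set o : {set gT} | o \subset S].
  by apply/setP => o; rewrite !inE.
have e2 : [set o in U | ~~ (o \subset S)] = U :\: [set o : {set gT} | o \subset S].
  by apply/setP => o; rewrite !inE andbC.
by rewrite e1 e2 -(cardsID [set o : {set gT} | o \subset S] U) addKn.
Qed.

Lemma prob_inj_bound (E : {set gT} -> bool) (Rr : {set {set gT}}) :
  (forall S S', sym_subset A S -> E S -> sym_subset A S' -> E S' ->
     XS S :&: Rr = XS S' :&: Rr -> S = S') ->
  (prob A p E <= (1 - p) ^ #|U :\: Rr|)%R.
Proof.
move=> inj.
set q := (1 - p)%R.
set V := U :&: Rr.
set g := fun Y : {set {set gT}} => (p ^ #|Y| * q ^ (#|U| - #|Y|))%R.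
have pq : (0 <= p <= q)%R by rewrite /q; lra.
have g0 : forall Y, (0 <= g Y)%R.
  move=> Y; apply: Rmult_le_pos; apply: pow_le; rewrite /q; lra.
rewrite /prob.
apply: Rle_trans (_ : \big[Rplus/0%R]_(S : {set gT} | sym_subset A S && E S) g (XS S :&: Rr) <= _)%R.
  apply: bigR_le => S _; rewrite weight_eq /g.
  apply: pow_shift => //.
  rewrite subset_leq_card ?subsetIl //=.
  by rewrite subset_leq_card //; apply/subsetP => o; rewrite inE => /andP [].
rewrite (eq_bigl (fun S => S \in [set S : {set gT} | sym_subset A S && E S])); last first.
  by move=> S; rewrite inE.
rewrite -(big_imset g (h := fun S : {set gT} => XS S :&: Rr) (A := [set S : {set gT} | sym_subset A S && E S])) /=; last first.
  move=> S S'; rewrite !inE => /andP [s1 e1] /andP [s2 e2].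
  exact: inj.
apply: Rle_trans (_ : \big[Rplus/0%R]_(Y in powerset V) g Y <= _)%R.
  apply: bigR_sub => // Y /imsetP [S _ ->].
  rewrite powersetE; apply: setSI.
  by apply/subsetP => o; rewrite inE => /andP [].
have gV : forall Y, Y \in powerset V -> g Y = (q ^ (#|U| - #|V|) * (p ^ #|Y| * q ^ (#|V| - #|Y|)))%R.
  move=> Y; rewrite powersetE => YV.
  have l1 := subset_leq_card YV.
  have l2 : (#|V| <= #|U|)%N by rewrite subset_leq_card // subsetIl.
  rewrite /g -Rmult_assoc (Rmult_comm _ (p ^ _)) Rmult_assoc -pow_add.
  rewrite plusE.
  have -> : (#|U| - #|V| + (#|V| - #|Y|))%N = (#|U| - #|Y|)%N.
    by rewrite addnC addnBAC // subnKC.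
  by [].
rewrite (eq_bigr _ gV) -big_distrr /= (sum_subsets p q (erefl _)).
have -> : (p + q)%R = 1%R by rewrite /q; ring.
rewrite pow1 Rmult_1_r cardsD.
by apply: Rle_refl.
Qed.

End ProbBound.

End M_P2.
Import M_P2.

Module M_P3.


Lemma iter_Rplus n (x : R) : iter n (Rplus x) 0%R = (INR n * x)%R.
Proof. elim: n => [|n IH]; first by rewrite /=; ring. rewrite iterS IH S_INR; ring. Qed.

Lemma sum_const_R (T : finType) (B : {pred T}) (x : R) :
  \big[Rplus/0%R]_(i in B) x = (INR #|B| * x)%R.
Proof. by rewrite big_const iter_Rplus. Qed.

Lemma card_imset_sum (T : finType) (Y : {set T}) (c : T -> {set T}) :
  (forall y, y \in Y -> y \in c y) ->
  (forall y z, y \in Y -> z \in c y -> z \in Y /\ c z = c y) ->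
  INR #|c @: Y| = \big[Rplus/0%R]_(y in Y) (/ INR #|c y|)%R.
Proof.
move=> cy cz.
rewrite (partition_big_imset c) /= -[LHS]Rmult_1_r -sum_const_R.
apply: eq_bigr => B /imsetP [y0 y0Y ->].
rewrite (eq_bigl (fun i => i \in c y0)); last first.
  move=> i; apply/andP/idP => [[iY /eqP <-]|ic]; first exact: cy.
  by have [-> ->] := cz _ _ y0Y ic.
rewrite (eq_bigr (fun _ => / INR #|c y0|)%R); last first.
  by move=> i ic; have [_ ->] := cz _ _ y0Y ic.
rewrite sum_const_R Rinv_r //.
apply: not_0_INR; apply/eqP; rewrite -lt0n card_gt0; apply/set0Pn.
by exists y0; apply: cy.
Qed.

End M_P3.
Import M_P3.

Module M_P5.


Local Open Scope group_scope.

Section Zbound.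
Variable gT : finGroupType.
Variables (A : {group gT}) (h : gT).
Hypotheses (abA : abelian A) (nA2 : ~~ pgroup 2 A) (h1 : h != 1) (hh : h * h = 1).

Lemma commA' x y : x \in A -> y \in A -> x * y = y * x.
Proof. by move=> xA yA; have := centsP abA x xA y yA. Qed.

Definition Wset := [set y in A | y ^+ 4 == 1].

Lemma gsW : group_set Wset.
Proof.
apply/group_setP; split; first by rewrite inE group1 expg1n eqxx.
move=> x y; rewrite !inE => /andP [xA /eqP x4] /andP [yA /eqP y4].
rewrite groupM //= expgMn ?x4 ?y4 ?mulg1 //.
exact: commA'.
Qed.

Canonical Wgroup := Group gsW.

Lemma W_2group : pgroup 2 Wset.
Proof.
apply/pgroupP => q qp qdiv.
have [x xW oxq] := Cauchy qp qdiv.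
move: xW; rewrite inE => /andP [_ x4].
have : (q %| 4)%N by rewrite -oxq order_dvdn.
move: qp; case: q {qdiv oxq} => [|[|[|[|[|q]]]]] //.
Qed.

Lemma W3 : (3 * #|Wset| <= #|A|)%N.
Proof.
have WA : Wset \subset A by apply/subsetP => y; rewrite inE => /andP [].
have eA := Lagrange WA.
case: (leqP 3 #|A : Wset|) => [le3|lt3].
  by rewrite -eA mulnC leq_mul2l le3 orbT.
exfalso; move: nA2; rewrite /pgroup -eA pnatM.
have := W_2group; rewrite /pgroup => -> /=.
have i0 := indexg_gt0 A Wset.
by move: lt3 i0; case: #|A : _| => [|[|[|]]].
Qed.

Definition Zset := [set y in A | y * y == h].
Definition A2 := [set y in A | y * y == 1].

Lemma Zbound : (6 * #|Zset| <= #|A|)%N.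
Proof.
case: (set_0Vmem Zset) => [-> |[y0 y0Z]]; first by rewrite cards0.
move: (y0Z); rewrite inE => /andP [y0A /eqP y0y0].
have ZA2 : #|Zset| <= #|A2|.
  rewrite -(card_imset _ (mulIg y0^-1)).
  apply: subset_leq_card; apply/subsetP => z /imsetP [y].
  rewrite inE => /andP [yA /eqP yy] ->; rewrite inE groupM ?groupV //=.
  have y0iA : y0^-1 \in A by rewrite groupV.
  have -> : y * y0^-1 * (y * y0^-1) = y * y * (y0^-1 * y0^-1).
    by rewrite -!mulgA (mulgA y0^-1) (commA' y0iA yA) -!mulgA.
  by rewrite yy -invMg y0y0 mulgV.
have ZW : Zset :|: A2 \subset Wset.
  apply/subsetP => y; rewrite !inE => /orP [] /andP [yA /eqP yy]; rewrite yA /=.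
    rewrite (_ : y ^+ 4 = (y * y) * (y * y)); first by rewrite yy hh.
    by rewrite !expgS expg0 mulg1 !mulgA.
  rewrite (_ : y ^+ 4 = (y * y) * (y * y)); first by rewrite yy mulg1.
  by rewrite !expgS expg0 mulg1 !mulgA.
have dis : Zset :&: A2 = set0.
  apply/setP => y; rewrite !inE; apply/negP => /andP [/andP [_ /eqP yy] /andP [_ /eqP yy1]].
  by move: h1; rewrite -yy yy1 eqxx.
have := subset_leq_card ZW; rewrite cardsU dis cards0 subn0 => le.
have := W3.
have : (2 * #|Zset| <= #|Wset|)%N by rewrite mul2n -addnn (leq_trans _ le) // leq_add2l.
move=> a b; apply: leq_trans b.
by rewrite (_ : 6 = muln 3 2) // -mulnA leq_mul2l a orbT.
Qed.

End Zbound.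

End M_P5.
Import M_P5.

Module M_P4.


Local Open Scope group_scope.

Definition Ev (gT : finGroupType) (K : {set gT}) (h : gT) (S : {set gT}) : bool :=
  [forall x in S :\: K, x * h \in S].

Section HK.
Variable gT : finGroupType.
Variables (A K : {group gT}) (h : gT).
Hypotheses (abA : abelian A) (KA : K \proper A) (hK : h \in K) (h1 : h != 1).

Local Notation H := <[h]>.
Local Notation Y := (A :\: K).
Definition u (y : gT) : {set gT} := [set y; y^-1].
Definition cls (y : gT) : {set gT} := y *: (H : {set gT}) :|: y^-1 *: (H : {set gT}).
Definition rep (B : {set gT}) : gT := odflt 1 [pick x in B].
Definition Rr : {set {set gT}} :=
  [set u x | x in K :\ 1] :|: [set u (rep (cls y)) | y in Y].

Lemma KsubA : K \subset A. Proof. exact: proper_sub. Qed.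
Lemma hA : h \in A. Proof. exact: (subsetP KsubA). Qed.
Lemma commA x y : x \in A -> y \in A -> x * y = y * x.
Proof. by move=> xA yA; have := centsP abA x xA y yA. Qed.

Lemma hiK i : h ^+ i \in K. Proof. exact: groupX. Qed.
Lemma hiA i : h ^+ i \in A. Proof. exact: groupX hA. Qed.

Lemma Y_mul y i : y \in Y -> y * h ^+ i \in Y.
Proof.
rewrite !inE => /andP [yK yA].
by rewrite groupMr ?hiK // yK groupM ?hiA.
Qed.

Lemma Y_inv y : y \in Y -> y^-1 \in Y.
Proof. by rewrite !inE !groupV. Qed.

Lemma sym_inv S x : sym_subset A S -> (x^-1 \in S) = (x \in S).
Proof. by case/andP => _ /eqP {2}<-; rewrite mem_invg. Qed.

Lemma sym_A S x : sym_subset A S -> x \in S -> x \in A :\ 1.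
Proof. by case/andP => /subsetP sS _ /sS. Qed.

Lemma closure S y : Ev K h S -> y \in Y -> y \in S -> forall i, y * h ^+ i \in S.
Proof.
move=> /forall_inP E yY yS; elim=> [|i IH]; first by rewrite mulg1.
rewrite expgSr mulgA; apply: E.
by rewrite inE IH andbT; have := Y_mul i yY; rewrite inE => /andP [].
Qed.

Lemma closure_iff S y i : Ev K h S -> y \in Y -> (y \in S) = (y * h ^+ i \in S).
Proof.
move=> E yY; apply/idP/idP => [yS|]; first exact: closure.
move=> yiS; have := closure E (Y_mul i yY) yiS (#[h] * i - i).
rewrite -mulgA -expgD subnKC; last by rewrite leq_pmull // order_gt0.
by rewrite expgM expg_order expg1n mulg1.
Qed.

Lemma memS_u S x : sym_subset A S -> (x \in S) = (u x \subset S).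
Proof.
move=> sS; apply/idP/subsetP => [xS z|]; last by apply; rewrite !inE eqxx.
by rewrite !inE => /orP [] /eqP ->; rewrite ?sym_inv.
Qed.

Lemma cls_self y : y \in cls y.
Proof. by rewrite inE mem_lcoset mulVg group1. Qed.

Lemma rep_cls y : rep (cls y) \in cls y.
Proof.
rewrite /rep; case: pickP => [x //|none].
by have := none y; rewrite cls_self.
Qed.

Lemma clsP y z : z \in cls y ->
  (exists i, z = y * h ^+ i) \/ (exists i, z = y^-1 * h ^+ i).
Proof.
rewrite inE !mem_lcoset => /orP [] /cycleP [i Ei].
  by left; exists i; rewrite -Ei mulKVg.
by right; exists i; rewrite invgK in Ei; rewrite -Ei mulKg.
Qed.

Lemma cls_Y y z : y \in Y -> z \in cls y -> z \in Y.
Proof.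
move=> yY /clsP [] [i ->]; first exact: Y_mul.
by apply: Y_mul; apply: Y_inv.
Qed.

Lemma inj_R S S' : sym_subset A S -> Ev K h S -> sym_subset A S' -> Ev K h S' ->
  [set o in inv_pairs A | o \subset S] :&: Rr =
  [set o in inv_pairs A | o \subset S'] :&: Rr -> S = S'.
Proof.
move=> sS ES sS' ES' eqX.
have key : forall x, x \in A :\ 1 -> u x \in Rr -> (x \in S) = (x \in S').
  move=> x xA xR.
  have xU : u x \in inv_pairs A by apply/imsetP; exists x.
  have := congr1 (fun X : {set {set gT}} => u x \in X) eqX.
  by rewrite !in_setI xR !andbT !inE xU /= -!memS_u.
apply/setP => x.
case xA1: (x \in A :\ 1); last first.
  by apply/idP/idP => xS; [move: (sym_A sS xS) | move: (sym_A sS' xS)]; rewrite xA1.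
case xK: (x \in K).
  apply: key => //; apply/setUP; left; apply/imsetP; exists x => //.
  by move: xA1; rewrite !inE xK => /andP [-> _].
have xY : x \in Y by move: xA1; rewrite !inE xK => /andP [_ ->].
set t := rep (cls x).
have tc : t \in cls x by apply: rep_cls.
have tY : t \in Y := cls_Y xY tc.
have tA1 : t \in A :\ 1.
  move: tY; rewrite !inE => /andP [tK ->]; rewrite andbT.
  by apply: contraNneq tK => ->; rewrite group1.
have tR : u t \in Rr by apply/setUP; right; apply/imsetP; exists x.
have ext : forall T, sym_subset A T -> Ev K h T -> (x \in T) = (t \in T).
  move=> T sT ET; case: (clsP tc) => [] [i ->]; first exact: closure_iff.
  by rewrite -(sym_inv x sT); apply: closure_iff => //; apply: Y_inv.
by rewrite (ext S) // (ext S') // key.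
Qed.

Hypothesis nA2 : ~~ pgroup 2 A.

Lemma cls_eq y z : y \in Y -> z \in cls y -> cls z = cls y.
Proof.
move=> yY zc.
have yA : y \in A by move: yY; rewrite inE => /andP [].
have yiA : y^-1 \in A by rewrite groupV.
have Hid : forall i, (h ^+ i) *: (H : {set gT}) = H.
  by move=> i; apply: lcoset_id; apply: mem_cycle.
have hiiA : forall i, (h ^+ i)^-1 \in A by move=> i; rewrite groupV hiA.
have Hid' : forall i, (h ^- i) *: (H : {set gT}) = H.
  by move=> i; apply: lcoset_id; rewrite groupV mem_cycle.
case: (clsP zc) => [] [i ->]; rewrite /cls.
  rewrite lcosetM Hid invMg commA // lcosetM.
  by rewrite Hid'.
rewrite lcosetM Hid invMg invgK commA // lcosetM Hid' setUC.
by [].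
Qed.

Lemma u_props1 y : y \in Y -> y \in u y.
Proof. by rewrite !inE eqxx. Qed.

Lemma u_props2 y z : y \in Y -> z \in u y -> z \in Y /\ u z = u y.
Proof.
move=> yY /set2P [] ->; first by split.
split; first exact: Y_inv.
by rewrite /u invgK setUC.
Qed.

Lemma card_U_split : #|inv_pairs A| = (#|u @: (K :\ 1)| + #|u @: Y|)%N.
Proof.
have eA : A :\ 1 = (K :\ 1) :|: Y.
  apply/setP => x; rewrite !inE.
  case xK: (x \in K).
    by rewrite (subsetP KsubA) // andbT orbF.
  have -> : x != 1 by apply: contraFneq xK => ->; rewrite group1.
  by [].
change (#|u @: (A :\ 1)| = (#|u @: (K :\ 1)| + #|u @: Y|)%N).
rewrite eA imsetU cardsU.
suff -> : u @: (K :\ 1) :&: u @: Y = set0 by rewrite cards0 subn0.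
apply/setP => o; rewrite !inE; apply/negP => /andP [/imsetP [x xK ->] /imsetP [y yY e]].
have : y \in u x by rewrite e !inE eqxx.
move: xK yY; rewrite !inE => /andP [_ xK] /andP [yK _].
by move=> /orP [] /eqP eyx; move: yK; rewrite eyx ?groupV xK.
Qed.

Lemma card_R_le : (#|Rr| <= #|u @: (K :\ 1)| + #|cls @: Y|)%N.
Proof.
rewrite /Rr cardsU; apply: leq_trans (leq_subr _ _) _.
rewrite leq_add2l.
have -> : [set u (rep (cls y)) | y in Y] = (fun B => u (rep B)) @: (cls @: Y).
  by rewrite -imset_comp.
exact: leq_imset_card.
Qed.

Lemma key_count : (INR #|u @: Y| - INR #|cls @: Y| <= INR #|inv_pairs A :\: Rr|)%R.
Proof.
have e1 := card_U_split.
have e2 := card_R_le.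
have e3 := cardsID Rr (inv_pairs A).
have e4 : (#|inv_pairs A :&: Rr| <= #|Rr|)%N by rewrite subset_leq_card // subsetIr.
have : (#|u @: Y| <= #|inv_pairs A :\: Rr| + #|cls @: Y|)%N by lia.
move/leP/le_INR; rewrite plus_INR; lra.
Qed.

Lemma cls_props2 y z : y \in Y -> z \in cls y -> z \in Y /\ cls z = cls y.
Proof. by move=> yY zc; split; [apply: cls_Y yY zc | apply: cls_eq]. Qed.

Lemma sum_terms :
  (\big[Rplus/0%R]_(y in Y) (/ INR #|u y| - / INR #|cls y|) <= INR #|inv_pairs A :\: Rr|)%R.
Proof.
apply: Rle_trans (key_count).
rewrite (card_imset_sum u_props1 u_props2) (card_imset_sum (fun y _ => cls_self y) cls_props2).
have : (\big[Rplus/0%R]_(y in Y) (/ INR #|u y| - / INR #|cls y|) +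
        \big[Rplus/0%R]_(y in Y) (/ INR #|cls y|) =
        \big[Rplus/0%R]_(y in Y) (/ INR #|u y|))%R.
  by rewrite -big_split; apply: eq_bigr => y _ /=; ring.
move=> e; rewrite -e; apply: Req_le; rewrite /Rminus Rplus_assoc Rplus_opp_r Rplus_0_r. by [].
Qed.


Lemma invINR_ge (a k : nat) : (0 < a)%N -> (a <= k)%N -> (/ INR k <= / INR a)%R.
Proof.
move=> a0 ak; apply: Rinv_le_contravar; first by apply: lt_0_INR; apply/ltP.
by apply: le_INR; apply/leP.
Qed.

Lemma INR2 : INR 2 = 2%R. Proof. by rewrite /=; ring. Qed.
Lemma INR3 : INR 3 = 3%R. Proof. by rewrite /=; ring. Qed.
Lemma INR4 : INR 4 = 4%R. Proof. by rewrite /=; ring. Qed.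

Lemma card_u_bounds y : (0 < #|u y| <= 2)%N.
Proof. by rewrite /u cards2; case: (y != y^-1). Qed.

Lemma u_sub_cls y : u y \subset cls y.
Proof.
apply/subsetP => z /set2P [] ->; first exact: cls_self.
by rewrite /cls inE; apply/orP; right; rewrite mem_lcoset mulVg group1.
Qed.

Lemma card_cls_ge y : (#[h] <= #|cls y|)%N.
Proof.
apply: leq_trans (_ : #|y *: (H : {set gT})| <= _)%N; first by rewrite card_lcoset.
by apply: subset_leq_card; rewrite /cls subsetUl.
Qed.

Lemma card_cls_disj y : y \in A -> y * y \notin H -> #|cls y| = muln 2 #[h].
Proof.
move=> yA yyH.
rewrite /cls cardsU !card_lcoset.
suff -> : y *: (H : {set gT}) :&: y^-1 *: (H : {set gT}) = set0.
  by rewrite cards0 subn0 addnn -mul2n.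
apply/setP => z; rewrite !inE !mem_lcoset invgK; apply/negP => /andP [a b].
have HA : (H : {set gT}) \subset A by rewrite cycle_subG hA.
have zA : z \in A.
  have := subsetP HA _ a; rewrite groupMl ?groupV //.
have : (y^-1 * z)^-1 * (y * z) \in H by rewrite groupM ?groupV.
rewrite invMg invgK.
have -> : z^-1 * y * (y * z) = y * y.
  have ziA : z^-1 \in A by rewrite groupV.
  rewrite mulgA -(mulgA z^-1 y y) (commA ziA (groupM yA yA)).
  by rewrite mulgKV.
by rewrite (negbTE yyH).
Qed.

Lemma term0 y : (0 <= / INR #|u y| - / INR #|cls y|)%R.
Proof.
have := card_u_bounds y => /andP [u0 _].
have := invINR_ge u0 (subset_leq_card (u_sub_cls y)); lra.
Qed.

Lemma term_r3 y : (3 <= #[h])%N -> (/ 6 <= / INR #|u y| - / INR #|cls y|)%R.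
Proof.
move=> r3; have := card_u_bounds y => /andP [u0 u2].
have i1 := invINR_ge u0 u2.
have i2 := invINR_ge (isT : (0 < 3)%N) (leq_trans r3 (card_cls_ge y)).
rewrite INR2 in i1; rewrite INR3 in i2; lra.
Qed.

Lemma term_r2 y : y \in A -> #[h] = 2 -> y * y != h ->
  (/ 4 <= / INR #|u y| - / INR #|cls y|)%R.
Proof.
move=> yA r2 yyh.
have := card_u_bounds y => /andP [u0 u2].
have i1 := invINR_ge u0 u2; rewrite INR2 in i1.
case yyH: (y * y \in H).
  have [i] := cyclePmin yyH; rewrite r2; case: i => [|[|//]] _ /=.
    rewrite expg0 => yy1.
    have e : y^-1 = y by apply/eqP; rewrite eq_invg_mul yy1.
    have cu : #|u y| = S O by rewrite /u e setUid cards1.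
    have i2 := invINR_ge (isT : (0 < 2)%N) (leq_trans (eq_leq (esym r2)) (card_cls_ge y)).
    rewrite INR2 in i2; rewrite cu /=. set c := (/ INR #|cls y|)%R in i2 *. rewrite Rinv_1. clearbody c. move: i2. clear. move=> i2. lra.
  by rewrite expg1 => e; move: yyh; rewrite e eqxx.
have c4 := card_cls_disj yA (negbT yyH); rewrite r2 in c4.
rewrite c4 INR4; lra.
Qed.

Lemma count12 : (INR #|A| <= 12 * INR #|inv_pairs A :\: Rr|)%R.
Proof.
have sK : (muln 2 #|K| <= #|A|)%N.
  have eL := Lagrange KsubA.
  have lt := proper_card KA.
  move: eL lt; case: #|A : K| => [|[|i]]; first by rewrite muln0 => <-.
    by rewrite muln1 => ->; rewrite ltnn.
  by move=> <- _; nia.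
have cY : (#|Y| + #|K| = #|A|)%N.
  rewrite cardsD (setIidPr KsubA) subnK //.
  by apply: subset_leq_card KsubA.
have ST := sum_terms.
have r1 : (1 < #[h])%N by rewrite order_gt1.
case r2: (#[h] == 2).
  move/eqP: r2 => r2.
  have hh : h * h = 1 by rewrite -expg2 -r2 expg_order.
  have Zb := Zbound abA nA2 h1 hh.
  have l1 : (\big[Rplus/0%R]_(y in Y :\: Zset A h) (/ 4) <=
             \big[Rplus/0%R]_(y in Y) (/ INR #|u y| - / INR #|cls y|))%R.
    apply: Rle_trans (_ : \big[Rplus/0%R]_(y in Y :\: Zset A h)
                 (/ INR #|u y| - / INR #|cls y|) <= _)%R.
      apply: bigR_le => y; rewrite !inE => /andP [yZ /andP [_ yA]].
      by apply: term_r2 => //; move: yZ; rewrite yA.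
    apply: bigR_sub => y; first by rewrite inE => /andP [].
    by move=> _; apply: term0.
  rewrite sum_const_R in l1.
  have cZ : (#|Y| <= #|Y :\: Zset A h| + #|Zset A h|)%N.
    have := cardsID (Zset A h) Y.
    have := subset_leq_card (subsetIr Y (Zset A h)).
    lia.
  have : (#|A| <= muln 3 #|Y :\: Zset A h|)%N by lia.
  move/leP/le_INR; rewrite mult_INR INR3 => hA3.
  lra.
have r3 : (3 <= #[h])%N by move: r1 r2; case: #[h] => [|[|[|]]].
have l1 : (\big[Rplus/0%R]_(y in Y) (/ 6) <=
           \big[Rplus/0%R]_(y in Y) (/ INR #|u y| - / INR #|cls y|))%R.
  by apply: bigR_le => y _; apply: term_r3.
rewrite sum_const_R in l1.
have : (#|A| <= muln 2 #|Y|)%N by lia.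
move/leP/le_INR; rewrite mult_INR INR2 => hA2.
lra.
Qed.

End HK.

End M_P4.
Import M_P4.

Module M_P6.


Local Open Scope group_scope.

Section Gen.
Variable gT : finGroupType.

Lemma gen_aux (K : {group gT}) n : forall (M : {group gT}),
  (#|K| - #|M| <= n)%N -> M \subset K ->
  exists s : seq gT, [/\ all (mem K) s, <<M :|: [set y in s]>> = K &
                        (expn 2 (size s) * #|M| <= #|K|)%N].
Proof.
elim: n => [|n IH] M le MK; case: (eqVproper MK) => [eMK|pMK].
- exists [::]; split => //=; last by rewrite mul1n eMK.
  have -> : [set y in [::] : seq gT] = set0 by apply/setP => y; rewrite !inE.
  by rewrite setU0 eMK genGid.
- by exfalso; have := proper_card pMK; move: le; lia.
- exists [::]; split => //=; last by rewrite mul1n eMK.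
  have -> : [set y in [::] : seq gT] = set0 by apply/setP => y; rewrite !inE.
  by rewrite setU0 eMK genGid.
have [_ [x xK xM]] := properP pMK.
set M' := <<M :|: [set x]>>%G.
have M'K : M' \subset K.
  rewrite /M' gen_subG; apply/subsetP => y; rewrite !inE => /orP [yM|/eqP ->//].
  exact: (subsetP MK).
have MM' : M \subset M'.
  by apply: subset_trans (subset_gen _); apply: subsetUl.
have xM' : x \in M' by apply: (subsetP (subset_gen _)); rewrite !inE eqxx orbT.
have pMM' : M \proper M' by apply/properP; split => //; exists x.
have d := cardSg MM'.
have lt := proper_card pMM'.
have lt2 : (2 * #|M| <= #|M'|)%N.
  case/dvdnP: d => k ek; rewrite ek in lt *.
  have g0 := cardG_gt0 M.
  case: k {ek} lt => [|[|k]] lt; first by rewrite mul0n in lt.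
    by rewrite mul1n ltnn in lt.
  by rewrite leq_mul2r orbC.
have cM'K := subset_leq_card M'K.
have hle : (#|K| - #|M'| <= n)%N by move: le lt cM'K; lia.
have [s [sK eK cK]] := IH M' hle M'K.
  exists (x :: s); split.
  - by rewrite /= xK.
  - apply/eqP; rewrite eqEsubset; apply/andP; split.
      rewrite gen_subG; apply/subsetP => y; rewrite !inE => /orP [yM|/orP [/eqP ->//|ys]].
        exact: (subsetP MK).
      by move/allP: sK => /(_ y ys).
    rewrite -{1}eK gen_subG; apply/subsetP => y; rewrite !inE => /orP [yM'|ys].
      apply: (subsetP (genS _)) yM'.
      by apply/subsetP => z; rewrite !inE => /orP [->|->]; rewrite ?orbT.
    by apply: (subsetP (subset_gen _)); rewrite !inE ys !orbT.
  - rewrite /= expnS -mulnA; apply: leq_trans cK.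
    by rewrite mulnCA leq_mul2l lt2 orbT.
Qed.

Lemma gen_small (K : {group gT}) :
  exists s : seq gT, [/\ all (mem K) s, <<[set y in s]>> = K & (expn 2 (size s) <= #|K|)%N].
Proof.
have [s [sK eK cK]] := @gen_aux K _ [1 gT]%G (leqnn _) (sub1G K).
exists s; split => //.
  rewrite -eK; apply/eqP; rewrite eqEsubset; apply/andP; split.
    by apply: genS; apply: subsetUr.
  rewrite gen_subG; apply/subsetP => y; rewrite !inE => /orP [/eqP ->|ys].
    exact: group1.
  by apply: (subsetP (subset_gen _)); rewrite inE.
by move: cK; rewrite cards1 muln1.
Qed.
End Gen.

End M_P6.
Import M_P6.

Module M_P7.


Section Union.
Variable gT : finGroupType.
Variable A : {set gT}.
Variable p : R.
Hypothesis p0 : (0 <= p)%R.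
Hypothesis p12 : (p <= 1/2)%R.

Lemma weight_ge0 S : (0 <= weight A S p)%R.
Proof. apply: Rmult_le_pos; apply: pow_le; lra. Qed.

Lemma prob_mono (E E' : {set gT} -> bool) :
  (forall S, sym_subset A S -> E S -> E' S) -> (prob A p E <= prob A p E')%R.
Proof.
move=> EE'; apply: bigR_sub => S; last by move=> _; apply: weight_ge0.
by case/andP => sS ES; rewrite sS (EE' _ sS ES).
Qed.

Lemma prob_false : prob A p (fun _ => false) = 0%R.
Proof. by rewrite /prob big_pred0 // => S; rewrite andbF. Qed.

Lemma union_bound (I : finType) (J : {set I}) (E : {set gT} -> bool)
  (F : I -> {set gT} -> bool) :
  (forall S, sym_subset A S -> E S -> exists2 i, i \in J & F i S) ->
  (prob A p E <= \big[Rplus/0%R]_(i in J) prob A p (F i))%R.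
Proof.
move=> cov; rewrite /prob big_mkcondr.
rewrite (eq_bigr (fun i => \big[Rplus/0%R]_(S | sym_subset A S)
            (if F i S then weight A S p else 0%R))); last first.
  by move=> i _; rewrite big_mkcondr.
rewrite (@exchange_big R 0%R Rplus).
apply: bigR_le => S sS.
case ES: (E S); last first.
  apply: bigR_ge0 => i _; case: (F i S); [exact: weight_ge0 | exact: Rle_refl].
have [i0 i0J Fi0] := cov S sS ES.
rewrite (bigD1 i0) //= Fi0.
have : (0 <= \big[Rplus/0%R]_(i in J | i != i0) (if F i S then weight A S p else 0%R))%R.
  apply: bigR_ge0 => i _; case: (F i S); [exact: weight_ge0 | exact: Rle_refl].
lra.
Qed.

End Union.

Lemma pow_exp (x : R) (k : nat) : ((exp x) ^ k = exp (INR k * x))%R.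
Proof.
elim: k => [|k IH]; first by rewrite /= Rmult_0_l exp_0.
by rewrite S_INR /= IH -exp_plus; congr exp; ring.
Qed.

Lemma q_pow_bound (p : R) (k : nat) : (0 <= p <= 1)%R -> ((1 - p) ^ k <= exp (- (p * INR k)))%R.
Proof.
move=> hp.
apply: Rle_trans (_ : (exp (- p)) ^ k <= _)%R.
  apply: pow_incr; split; first lra.
  by have := exp_ineq1_le (- p); lra.
rewrite pow_exp; apply: Req_le; congr exp; ring.
Qed.

Lemma exp_mono (x y : R) : (x <= y)%R -> (exp x <= exp y)%R.
Proof.
case/Rle_lt_or_eq_dec => [lt|->]; last exact: Rle_refl.
by apply: Rlt_le; apply: exp_increasing.
Qed.

Lemma ln_mono (x y : R) : (0 < x)%R -> (x <= y)%R -> (ln x <= ln y)%R.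
Proof.
move=> x0; case/Rle_lt_or_eq_dec => [lt|->]; last exact: Rle_refl.
by apply: Rlt_le; apply: ln_increasing.
Qed.

Local Open Scope group_scope.

Definition Fev (gT : finGroupType) (A : {set gT}) (m : nat)
  (i : gT * {ffun 'I_m -> gT}) (S : {set gT}) : bool :=
  [&& i.1 != 1, <<[set i.2 j | j : 'I_m]>> \proper A,
      i.1 \in <<[set i.2 j | j : 'I_m]>> & Ev <<[set i.2 j | j : 'I_m]>> i.1 S].

Lemma term_bound (gT : finGroupType) (A : {group gT}) (p : R) (m : nat)
  (i : gT * {ffun 'I_m -> gT}) :
  abelian A -> ~~ pgroup 2 A -> (0 <= p)%R -> (p <= 1/2)%R ->
  (prob A p (Fev A i) <= exp (- (p * (INR #|A| / 12))))%R.
Proof.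
move=> abA nA2 p0 p12.
set K := <<[set i.2 j | j : 'I_m]>>%G.
case cond: [&& i.1 != 1, K \proper A & i.1 \in K]; last first.
  apply: Rle_trans (_ : prob A p (fun _ => false) <= _)%R.
    apply: prob_mono => // S _ /and4P [a b c _].
    by move: cond; rewrite a b c.
  rewrite prob_false; apply: Rlt_le; apply: exp_pos.
move/and3P: cond => [h1 KA hK].
apply: Rle_trans (_ : prob A p (Ev K i.1) <= _)%R.
  by apply: prob_mono => // S _ /and4P [_ _ _].
apply: Rle_trans (prob_inj_bound p0 p12 (inj_R KA hK)) _.
apply: Rle_trans (q_pow_bound _ _) _; first lra.
apply: exp_mono.
have := count12 abA KA hK h1 nA2.
set k := INR _; set n := INR _ => c.
have c' : (k / 12 <= n)%R by lra.
have := Rmult_le_compat_l _ _ _ p0 c'; lra.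
Qed.

End M_P7.
Import M_P7.

Module M_P8.


Lemma NatpowE m n : Nat.pow m n = expn m n.
Proof. by elim: n => [|n IH] //=; rewrite expnS IH. Qed.

Lemma numeric (n T : nat) (p : R) :
  (2 <= n)%N -> (expn 2 T <= n)%N ->
  (25 * (log2 (INR n)) ^ 2 / INR n <= p)%R ->
  (INR (expn n T) * exp (- (p * (INR n / 12))) <= 1 * exp (- (log2 (INR n)) ^ 2))%R.
Proof.
move=> n2 Tn hp.
have n0 : (0 < INR n)%R by apply: lt_0_INR; apply/ltP; lia.
have n1 : (1 <= INR n)%R by apply: (le_INR 1); apply/leP; lia.
have l2p : (0 < ln 2)%R by have := ln_lt_2; lra.
have l21 : (ln 2 < 1)%R.
  have e1 := exp_ineq1 1 (R1_neq_R0).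
  have := @ln_increasing 2 (exp 1); rewrite ln_exp; apply; lra.
set l2 := (ln 2)%R in l2p l21 *.
set L := log2 (INR n).
have lnn : ln (INR n) = (L * l2)%R by rewrite /L /log2 -/l2; field; lra.
have lnn0 : (0 <= ln (INR n))%R by rewrite -ln_1; apply: ln_mono; lra.
have TL : (INR T <= L)%R.
  have h : (ln (2 ^ T) <= ln (INR n))%R.
    apply: ln_mono; first by apply: pow_lt; lra.
    rewrite -(_ : INR 2 = 2%R); last by rewrite /=; ring.
    by rewrite -pow_INR NatpowE; apply: le_INR; apply/leP.
  rewrite ln_pow in h; last lra.
  rewrite lnn -/l2 in h.
  by apply: (Rmult_le_reg_r l2).
have e1 : INR (expn n T) = exp (INR T * ln (INR n)).
  by rewrite -NatpowE pow_INR -ln_pow // exp_ln //; apply: pow_lt.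
rewrite e1 -exp_plus Rmult_1_l; apply: exp_mono.
have h1 : (INR T * ln (INR n) <= L * ln (INR n))%R by apply: Rmult_le_compat_r.
rewrite lnn in h1.
have h2 : (25 * L ^ 2 <= p * INR n)%R.
  have := Rmult_le_compat_r (INR n) _ _ (Rlt_le _ _ n0) hp.
  by rewrite /Rdiv Rmult_assoc Rinv_l; [rewrite Rmult_1_r | lra].
have h3 : (L ^ 2 * l2 <= L ^ 2 * 1)%R.
  by apply: Rmult_le_compat_l; [apply: pow2_ge_0 | lra].
have e2 : (L * (L * l2) = L ^ 2 * l2)%R by ring.
have e3 : (p * (INR n / 12) = p * INR n / 12)%R by field.
rewrite e3; rewrite e2 in h1.
rewrite lnn; have := pow2_ge_0 L; lra.
Qed.

Local Open Scope group_scope.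

Lemma proper_half (gT : finGroupType) (K A : {group gT}) :
  K \proper A -> (muln 2 #|K| <= #|A|)%N.
Proof.
move=> KA.
have eL := Lagrange (proper_sub KA).
have lt := proper_card KA.
move: eL lt; case: #|A : K| => [|[|i]]; first by rewrite muln0 => <-.
  by rewrite muln1 => ->; rewrite ltnn.
by move=> <- _; nia.
Qed.

Definition Jset (gT : finGroupType) (A : {set gT}) (m : nat) :
  {set gT * {ffun 'I_m -> gT}} := setX A [set f : {ffun 'I_m -> gT} | f \in ffun_on A].

Lemma cover (gT : finGroupType) (A : {group gT}) (S : {set gT}) :
  bad_event A S ->
  exists2 i, i \in Jset A (trunc_log 2 #|A|).-1 & Fev A i S.
Proof.
set m := (trunc_log 2 #|A|).-1.
move/existsP => [H] /existsP [K] /and4P [Hn1 HK KA cl].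
have [h hH h1] := trivgPn _ Hn1.
have [s [sK eK cs]] := gen_small K.
have KsA := proper_sub KA.
have sm : (size s <= m)%N.
  have := proper_half KA => h2.
  have : (expn 2 (size s).+1 <= #|A|)%N by rewrite expnS; lia.
  move/trunc_log_max => /(_ isT); rewrite /m; lia.
set f := [ffun j : 'I_m => nth 1 s j].
have fK : forall j, f j \in K.
  move=> j; rewrite ffunE; case: (ltnP j (size s)) => js.
    by move/allP: sK; apply; apply: mem_nth.
  by rewrite nth_default // group1.
have gen_eq : <<[set f j | j : 'I_m]>> = K.
  apply/eqP; rewrite eqEsubset; apply/andP; split.
    by rewrite gen_subG; apply/subsetP => y /imsetP [j _ ->].
  rewrite -{1}eK; apply: genS; apply/subsetP => y; rewrite inE => ys.
  have lt : (index y s < m)%N by apply: leq_trans sm; rewrite index_mem.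
  by apply/imsetP; exists (Ordinal lt) => //; rewrite ffunE /= nth_index.
exists (h, f).
  rewrite /Jset !inE /= (subsetP KsA) ?(subsetP HK) //=.
  by apply/ffun_onP => j; apply: (subsetP KsA).
rewrite /Fev /= gen_eq h1 KA (subsetP HK) //=.
apply/forall_inP => x xSK.
have := forall_inP cl x xSK => /subsetP /(_ (x * h)).
rewrite !inE mem_lcoset mulKg hH => /(_ isT) /andP [_ ->] //.
Qed.


End M_P8.
Import M_P8.

Theorem mainTheorem2 :
  exists (C : R) (N : nat), (0 < C)%R /\
  forall (gT : finGroupType) (A : {group gT}) (p : R),
    abelian A ->
    ~~ pgroup 2 A ->
    (N <= #|A|)%N ->
    (25 * (log2 (INR #|A|)) ^ 2 / INR #|A| <= p)%R ->
    (p <= 1 / 2)%R ->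
    (prob A p (bad_event A) <= C * exp (- (log2 (INR #|A|)) ^ 2))%R.
Proof.
exists 1%R, 0%N; split; first lra.
move=> gT A p abA nA2 _ plow phigh.
have n2 : (2 <= #|A|)%N.
  have := cardG_gt0 A; case e: #|A| => [|[|n]] //.
  by move: nA2; rewrite /pgroup e.
have n0 : (0 < INR #|A|)%R by apply: lt_0_INR; apply/ltP; lia.
have p0 : (0 <= p)%R.
  apply: Rle_trans plow; apply: Rmult_le_pos.
    by apply: Rmult_le_pos; [lra | apply: pow2_ge_0].
  by apply: Rlt_le; apply: Rinv_0_lt_compat.
set m := (trunc_log 2 #|A|).-1.
have UB : (prob A p (bad_event A) <= \big[Rplus/0%R]_(i in Jset A m) prob A p (Fev A i))%R.
  by apply: union_bound => // S _ bS; apply: cover.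
apply: Rle_trans UB _.
apply: Rle_trans (_ : \big[Rplus/0%R]_(i in Jset A m) exp (- (p * (INR #|A| / 12))) <= _)%R.
  by apply: bigR_le => i _; apply: term_bound.
rewrite sum_const_R.
have T1 : (1 <= trunc_log 2 #|A|)%N by apply: trunc_log_max.
have cJ : #|Jset A m| = expn #|A| (trunc_log 2 #|A|).
  rewrite /Jset cardsX cardsE card_ffun_on card_ord -expnS /m.
  by rewrite prednK.
rewrite cJ; apply: numeric => //.
by apply: trunc_logP => //; lia.
Qed.
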